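(* Let $p$ be an odd prime, $n$ a positive integer, and let $f$ be the function on $\mathbb{F}_{p^n}$ defined by $f(0)=1$, $f(1)=0$ and $f(x)=x^{-1}$ for $x\notin\{0,1\}$. Then $\nabla_f=4$ if $p=29$ or $p=37$, and $\nabla_f\le 3$ otherwise. Furthermore, for $a,b\in\mathbb{F}_{p^n}$, $\nabla_f(a,b)=4$ if and only if one of the following holds: (1) $p=29$ and $(a,b)=(\pm2,\pm12)$ or $(a,b)=(\pm12,\pm2)$; (2) $p=37$ and $(a,b)=(\pm2,\pm6)$ or $(a,b)=(\pm6,\pm2)$.
   Context: For $a,b\in\mathbb{F}_{p^n}$, $\nabla_f(a,b)$ is the number of $x\in\mathbb{F}_{p^n}$ with $f(x+a+b)-f(x+a)-f(x+b)+f(x)=0$. For odd $p$ the second-order zero differential uniformity is $\nabla_f=\max\{\nabla_f(a,b): a,b\in\mathbb{F}_{p^n}\setminus\{0\}\}$. The function $f$ is $Inv\circ(0,1)$ with $Inv(x)=x^{p^n-2}$ and $(0,1)$ the transposition swapping $0$ and $1$. Integers such as $\pm2,\pm6,\pm12$ denote the corresponding elements of the prime field $\mathbb{F}_p\subseteq\mathbb{F}_{p^n}$. *)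

(* Defs.v *)
From HB Require Import structures.
From mathcomp Require Import all_boot all_order all_algebra.
Set Implicit Arguments. Unset Strict Implicit. Unset Printing Implicit Defensive.
Import GRing.Theory.
Local Open Scope ring_scope.

Definition finv01 (F : finFieldType) (x : F) : F :=
  if x == 0 then 1 else if x == 1 then 0 else x^-1.

Definition nabla (F : finFieldType) (f : F -> F) (a b : F) : nat :=
  #|[set x : F | f (x + a + b) - f (x + a) - f (x + b) + f x == 0%R]|.

Definition nablaU (F : finFieldType) (f : F -> F) : nat :=
  \max_(a : F | a != 0%R) \max_(b : F | b != 0%R) nabla f a b.

Definition pm (F : finFieldType) (c : nat) (x : F) : Prop :=
  x = c%:R \/ x = - c%:R.

(* Main.v *)
Require Import Defs.
From HB Require Import structures.
From mathcomp Require Import all_boot all_order all_algebra.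
From mathcomp Require Import ring zify.
From mathcomp Require Import finfield.
From Stdlib Require Classical_Prop.
Set Implicit Arguments. Unset Strict Implicit. Unset Printing Implicit Defensive.
Import GRing.Theory.
Local Open Scope ring_scope.

Section Alg.
Variable F : finFieldType.
Variable p : nat.
Hypothesis chF : p \in [pchar F].
Hypothesis oddp : odd p.

Local Notation f := (@finv01 F).

Lemma natF0 k : ((k%:R : F) == 0) = (p %| k)%N.
Proof. by rewrite (dvdn_pcharf chF). Qed.

Lemma prp : prime p. Proof. exact: pcharf_prime chF. Qed.

Lemma natF_coprime m k : (m%:R : F) = 0 -> (k%:R : F) = 0 -> coprime m k -> False.
Proof.
move=> /eqP; rewrite natF0 => hm /eqP; rewrite natF0 => hk /eqP hc.
have : (p %| gcdn m k)%N by rewrite dvdn_gcd hm hk.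
rewrite hc dvdn1 => /eqP p1; have := prp; by rewrite p1.
Qed.

Lemma two_nz : (2 : F) != 0.
Proof.
rewrite natF0; apply/negP => /(dvdn_leq (isT : (0 < 2)%N)) h.
have := prime_gt1 prp => h2.
have p2 : p = 2%N by lia.
by move: oddp; rewrite p2.
Qed.

Lemma f0 : f 0 = 1. Proof. by rewrite /finv01 eqxx. Qed.
Lemma f1 : f 1 = 0. Proof. by rewrite /finv01 oner_eq0 eqxx. Qed.
Lemma fE y : y != 0 -> y != 1 -> f y = y^-1.
Proof. by rewrite /finv01 => /negPf -> /negPf ->. Qed.

Definition E0 (u v : F) := f 0 + f (u + v) - f u - f v.
Definition E1 (u v : F) := f 1 + f (1 + u + v) - f (1 + u) - f (1 + v).

Lemma pure0_lem u v : u != 0 -> v != 0 -> u != 1 -> v != 1 -> u + v != 1 ->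
  E0 u v = 0 -> u + v != 0 /\ u * v * (u + v + 1) = (u + v) ^+ 2.
Proof.
move=> u0 v0 u1 v1 s1; rewrite /E0.
have [s0|s0] := eqVneq (u + v) 0.
  have hv : v = - u by rewrite -[v](addKr u) s0 addr0.
  rewrite s0 f0 (fE u0 u1) (fE v0 v1) hv invrN => h.
  move: two_nz; have -> : (2:F) = 1 + 1 - u^-1 - - u^-1 by ring.
  by rewrite h eqxx.
rewrite f0 (fE u0 u1) (fE v0 v1) (fE s0 s1) => h; split => //.
apply/eqP; rewrite -subr_eq0; apply/eqP.
have -> : u * v * (u + v + 1) - (u + v) ^+ 2 = u * v * (u + v) * (1 + (u + v)^-1 - u^-1 - v^-1).
  field.
by rewrite u0 v0 s0.
by rewrite h mulr0.
Qed.

Lemma lin1 (c1 : F) {A1 B1 X : F} : A1 = B1 -> X = c1 * (A1 - B1) -> X = 0.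
Proof. by move=> -> ->; rewrite subrr mulr0. Qed.
Lemma lin2 (c1 c2 : F) {A1 B1 A2 B2 X : F} : A1 = B1 -> A2 = B2 ->
  X = c1 * (A1 - B1) + c2 * (A2 - B2) -> X = 0.
Proof. by move=> -> -> ->; rewrite !subrr !mulr0 addr0. Qed.
Lemma lin3 (c1 c2 c3 : F) {A1 B1 A2 B2 A3 B3 X : F} : A1 = B1 -> A2 = B2 -> A3 = B3 ->
  X = c1 * (A1 - B1) + c2 * (A2 - B2) + c3 * (A3 - B3) -> X = 0.
Proof. by move=> -> -> -> ->; rewrite !subrr !mulr0 !addr0. Qed.
Arguments lin1 c1 {A1 B1 X}.
Arguments lin2 c1 c2 {A1 B1 A2 B2 X}.
Arguments lin3 c1 c2 c3 {A1 B1 A2 B2 A3 B3 X}.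

Lemma one_neq_m1 : (1 : F) != -1.
Proof.
apply/negP => /eqP h; move: two_nz.
by rewrite (lin1 1 h (_ : (2:F) = _)) ?eqxx //; ring.
Qed.

Lemma subr0E (x y : F) : x - y = 0 -> x = y.
Proof. by move/eqP; rewrite subr_eq0 => /eqP. Qed.

Lemma mul2_eq0 (x : F) : 2 * x = 0 -> x = 0.
Proof. by move/eqP; rewrite mulf_eq0 (negbTE two_nz) /= => /eqP. Qed.

Lemma neq1 (u : F) : u != 0 -> 1 + u != 1.
Proof. by apply: contra => /eqP h; apply/eqP; rewrite -(addKr 1 u) h addNr. Qed.

Ltac fside := repeat (apply/andP; split); try assumption.

Lemma pure1_lem u v : u != 0 -> v != 0 -> 1 + u != 0 -> 1 + v != 0 -> 1 + u + v != 0 ->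
  E1 u v = 0 -> u + v != 0 /\ u * v = (1 + u + v) ^+ 2.
Proof.
move=> u0 v0 hu hv hs.
have [s0|s0] := eqVneq (u + v) 0.
  have hv' : v = - u by rewrite -[v](addKr u) s0 addr0.
  have e1 : 1 + u + v = 1 by rewrite -addrA s0 addr0.
  rewrite /E1 e1 f1 (fE hu (neq1 u0)) (fE hv (neq1 v0)) => h.
  subst v; move: two_nz.
  have -> : (2:F) = - ((1 + u) * (1 + - u) * (0 + 0 - (1 + u)^-1 - (1 + - u)^-1)).
    field. fside.
  by rewrite h mulr0 oppr0 eqxx.
have s1 : 1 + u + v != 1 by rewrite -addrA neq1.
rewrite /E1 f1 add0r (fE hs s1) (fE hu (neq1 u0)) (fE hv (neq1 v0)) => h; split => //.
apply: subr0E.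
have -> : u * v - (1 + u + v) ^+ 2 =
  (1 + u) * (1 + v) * (1 + u + v) * ((1 + u + v)^-1 - (1 + u)^-1 - (1 + v)^-1).
  field. fside.
by rewrite h mulr0.
Qed.

Lemma E0sym u v : E0 u v = E0 v u.
Proof. by rewrite /E0 [u + v]addrC; ring. Qed.

Lemma m1_nz : (-1 : F) != 0. Proof. by rewrite oppr_eq0 oner_eq0. Qed.

Lemma both1 v : v != 0 -> E0 1 v = 0 ->
  v ^+ 2 + v = 1 \/ ((3 : F) = 0 /\ (v = 1 \/ v = -1)).
Proof.
move=> v0; rewrite /E0 f0 f1 subr0.
have [->|v1] := eqVneq v 1.
  have t0 : (1 + 1 : F) != 0 := two_nz.
  rewrite (fE t0 (neq1 (oner_neq0 F))) f1 => h; right; split; last by left.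
  apply: (lin1 2 h); field. fside.
have [->|vm1] := eqVneq v (-1).
  have mm : (-1:F) != 1 by rewrite eq_sym one_neq_m1.
  rewrite subrr f0 (fE m1_nz mm) invrN1 => h; right; split; last by right.
  by apply: (lin1 1 h); ring.
have hv : 1 + v != 0.
  by apply: contra vm1 => /eqP h; apply/eqP; rewrite -(addKr 1 v) h addr0.
rewrite (fE hv (neq1 v0)) (fE v0 v1) => h; left; apply: subr0E.
apply: (lin1 (v * (1 + v)) h); field. fside.
Qed.

Definition T1 (u v : F) := u = 1 /\ v ^+ 2 + v = 1.
Definition T2 (u v : F) := v = 1 /\ u ^+ 2 + u = 1.
Definition T3 (u v : F) := u + v = 1 /\ u * v = 1.
Definition pmr (x y : F) := x = y \/ x = - y.
Definition spec (u v : F) := (3 : F) = 0 /\ pmr u 1 /\ pmr v 1.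

Lemma both_lem u v : u != 0 -> v != 0 -> (u = 1 \/ v = 1 \/ u + v = 1) -> E0 u v = 0 ->
  [\/ T1 u v, T2 u v, T3 u v | spec u v].
Proof.
move=> u0 v0 h1 h.
have c1 : u = 1 -> [\/ T1 u v, T2 u v, T3 u v | spec u v].
  move=> hu; subst u; case: (both1 v0 h) => [h2|[h3 h4]]; first by constructor 1.
  by constructor 4; split => //; split; [left|].
have c2 : v = 1 -> [\/ T1 u v, T2 u v, T3 u v | spec u v].
  move=> hv; subst v; rewrite E0sym in h; case: (both1 u0 h) => [h2|[h3 h4]].
    by constructor 2.
  by constructor 4; split => //; split; [|left].
case: h1 => [/c1 //|[/c2 //|hs]].
have [/c1 //|u1] := eqVneq u 1.
have [/c2 //|v1] := eqVneq v 1.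
constructor 3; split => //.
move: h; rewrite /E0 hs f0 f1 (fE u0 u1) (fE v0 v1) => h.
apply: subr0E; rewrite -hs.
apply: (lin1 (u * v) h); field. fside.
Qed.


Definition pe0 (u v : F) := u * v * (u + v + 1) - (u + v) ^+ 2.
Definition pe1 (u v : F) := u * v - (1 + u + v) ^+ 2.
Definition dif (u v u' v' : F) :=
  [\/ u' = - u /\ v' = v, u' = u /\ v' = - v | u' = - u /\ v' = - v].

Lemma nz3 (x y z : F) : x != 0 -> y != 0 -> z != 0 -> 2 * x * y * z = 0 -> False.
Proof.
move=> x0 y0 z0 /eqP; rewrite !mulf_eq0 (negbTE two_nz) (negbTE x0) (negbTE y0).
by rewrite (negbTE z0).
Qed.

Lemma P0pair u v u' v' : u != 0 -> v != 0 -> dif u v u' v' ->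
  u != 1 -> v != 1 -> u + v != 0 -> pe0 u v = 0 ->
  u' != 1 -> v' != 1 -> pe0 u' v' = 0 -> False.
Proof.
rewrite /pe0 => u0 v0 [[-> ->]|[-> ->]|[-> ->]] u1 v1 s0 h _ _ h'.
- have v10 : v - 1 != 0 by rewrite subr_eq0.
  apply: (nz3 u0 v0 v10); apply: (lin2 1 (-1) h h'); ring.
- have u10 : u - 1 != 0 by rewrite subr_eq0.
  apply: (nz3 u0 v0 u10); apply: (lin2 1 (-1) h h'); ring.
- apply: (nz3 u0 v0 s0); apply: (lin2 1 (-1) h h'); ring.
Qed.

Lemma P1opp u v : u + v != 0 -> pe1 u v = 0 -> pe1 (- u) (- v) = 0 -> False.
Proof.
rewrite /pe1 => s0 h h'.
have : 2 * (2 * (u + v)) = 0 by apply: (lin2 (-1) 1 h h'); ring.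
by move/mul2_eq0/mul2_eq0/eqP; rewrite (negbTE s0).
Qed.

Lemma P1adj u v : u != 0 -> pe1 u v = 0 -> pe1 (- u) v = 0 -> v = -2 /\ u ^+ 2 = -1.
Proof.
rewrite /pe1 => u0 h h'.
have hv : v + 2 = 0.
  have : 2 * u * (v + 2) = 0 by apply: (lin2 (-1) 1 h h'); ring.
  by move/eqP; rewrite !mulf_eq0 (negbTE two_nz) (negbTE u0) /= => /eqP.
split; first by apply: subr0E; rewrite opprK.
apply: subr0E; rewrite opprK; apply: mul2_eq0.
apply: (lin3 (-1) (-1) (- 2 * v) h h' hv); ring.
Qed.

Lemma Xcore k w : k ^+ 2 = -1 -> pmr w 2 -> pe0 k w = 0 ->
  ((29 : F) = 0 /\ pmr k 12) \/ ((37 : F) = 0 /\ pmr k 6).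
Proof.
rewrite /pe0 => hk [->|->] h.
- have r : 2 * k - 5 = 0 by apply: (lin2 1 (-1) h hk); ring.
  have h29 : (29 : F) = 0 by apply: (lin2 4 (- (2 * k + 5)) hk r); ring.
  left; split => //; right; apply: subr0E; rewrite opprK; apply: mul2_eq0.
  by apply: (lin2 1 1 r h29); ring.
- have r : 6 * k - 1 = 0 by apply: (lin2 1 3 h hk); ring.
  have h37 : (37 : F) = 0 by apply: (lin2 36 (- (6 * k + 1)) hk r); ring.
  right; split => //; right; apply: subr0E; rewrite opprK.
  have h6 : (6 : F) != 0.
    apply/negP => /eqP h6; apply: (natF_coprime h6 h37); done.
  have : 6 * (k + 6) = 0 by apply: (lin2 1 1 r h37); ring.
  by move/eqP; rewrite mulf_eq0 (negbTE h6) /= => /eqP.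
Qed.


Lemma one_nz : (1 : F) != 0. Proof. exact: oner_neq0. Qed.

Lemma difC u v u' v' : dif u v u' v' -> dif u' v' u v.
Proof.
case=> [[-> ->]|[-> ->]|[-> ->]]; rewrite /dif ?opprK;
  by [constructor 1 | constructor 2 | constructor 3].
Qed.

Lemma difS u v u' v' : dif u v u' v' -> dif v u v' u'.
Proof.
case=> [[-> ->]|[-> ->]|[-> ->]]; rewrite /dif;
  by [constructor 1 | constructor 2 | constructor 3].
Qed.

Lemma T12 u v : T1 u v <-> T2 v u. Proof. by []. Qed.
Lemma T3S u v : T3 u v -> T3 v u.
Proof. by case=> h1 h2; split; [rewrite addrC | rewrite mulrC]. Qed.

Lemma c11 u v u' v' : v != 0 -> dif u v u' v' -> T1 u v -> T1 u' v' -> False.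
Proof.
move=> v0 hd [hu hQ] [hu' hQ']; subst u u'.
case: hd => [[h _]|[_ hv]|[h _]]; try by move: one_neq_m1; rewrite -h eqxx.
subst v'; move/eqP: v0; apply; apply: mul2_eq0.
by apply: (lin2 1 (-1) hQ hQ'); ring.
Qed.

Lemma c12 u v u' v' : dif u v u' v' -> T1 u v -> T2 u' v' -> False.
Proof.
move=> hd [hu hQ] [hv' hQ']; subst u.
have [h|h] : u' = 1 \/ u' = -1 by case: hd => [[-> _]|[-> _]|[-> _]]; [right|left|right].
- subst u'; move/eqP: one_nz; apply; by apply: (lin1 1 hQ'); ring.
- subst u'; move/eqP: one_nz; apply; by apply: (lin1 (-1) hQ'); ring.
Qed.

Lemma c13 u v u' v' : v != 0 -> dif u v u' v' -> T1 u v -> T3 u' v' -> False.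
Proof.
move=> v0 hd [hu hQ] [hs hm]; subst u.
case: hd => [[h1 h2]|[h1 h2]|[h1 h2]]; subst u' v'.
- move/eqP: one_nz; apply; by apply: (lin2 (-1) (-v) hQ hm); ring.
- move/eqP: v0; apply; apply: (lin1 (-1) hs); ring.
- move/eqP: one_nz; apply; by apply: (lin2 1 (-(v + 2)) hQ hm); ring.
Qed.

Lemma c33 u v u' v' : dif u v u' v' -> T3 u v -> T3 u' v' -> False.
Proof.
move=> hd [hs hm] [hs' hm'].
case: hd => [[h1 h2]|[h1 h2]|[h1 h2]]; subst u' v'; move/eqP: two_nz; apply.
- by apply: (lin2 (-1) (-1) hm hm'); ring.
- by apply: (lin2 (-1) (-1) hm hm'); ring.
- by apply: (lin2 (-1) (-1) hs hs'); ring.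
Qed.

Lemma TT u v u' v' : u != 0 -> v != 0 -> dif u v u' v' ->
  [\/ T1 u v, T2 u v | T3 u v] -> [\/ T1 u' v', T2 u' v' | T3 u' v'] -> False.
Proof.
move=> u0 v0 hd.
have v0' : v' != 0 by case: hd => [[_ ->]|[_ ->]|[_ ->]]; rewrite ?oppr_eq0.
have u0' : u' != 0 by case: hd => [[-> _]|[-> _]|[-> _]]; rewrite ?oppr_eq0.
case=> [h|h|h] [h'|h'|h'].
- exact: (c11 v0 hd h h').
- exact: (c12 hd h h').
- exact: (c13 v0 hd h h').
- exact: (c12 (difC hd) h' h).
- exact: (c11 u0 (difS hd) h h').
- exact: (c13 u0 (difS hd) h (T3S h')).
- exact: (c13 v0' (difC hd) h' h).
- exact: (c13 u0' (difS (difC hd)) h' (T3S h)).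
- exact: (c33 hd h h').
Qed.

Lemma T1_pure0 u v u' v' : T1 u v -> pmr u' u -> pmr v' v -> u' != 1 -> pe0 u' v' = 0 ->
  (15 : F) = 0.
Proof.
rewrite /pe0 => [[hu hQ]] hu' hv' u1 h; subst u.
case: hu' => hu'; subst u'; first by rewrite eqxx in u1.
case: hv' => hv'; subst v'.
- have r : 4 * v - 3 = 0 by apply: (lin2 1 2 h hQ); ring.
  have h5 : (5 : F) = 0 by apply: (lin2 16 (- (4 * v + 7)) hQ r); ring.
  have -> : (15 : F) = 3 * 5 by ring.
  by rewrite h5 mulr0.
- have h3 : (3 : F) = 0 by apply: (lin2 (-1) (-2) h hQ); ring.
  have -> : (15 : F) = 5 * 3 by ring.
  by rewrite h3 mulr0.
Qed.

Lemma T1_pure1 u v u' v' : T1 u v -> pmr u' u -> pmr v' v -> 1 + u' != 0 -> pe1 u' v' = 0 ->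
  (u' = u /\ v' = v /\ (11 : F) = 0) \/ (u' = u /\ v' = - v /\ (29 : F) = 0).
Proof.
rewrite /pe1 => [[hu hQ]] hu' hv' u1 h; subst u.
case: hu' => hu'; subst u'; last by rewrite subrr eqxx in u1.
case: hv' => hv'; subst v'.
- have r : 2 * v + 5 = 0 by apply: (lin2 (-1) (-1) h hQ); ring.
  left; do 2!split => //; by apply: (lin2 4 (- (2 * v - 3)) hQ r); ring.
- have r : 4 * v - 5 = 0 by apply: (lin2 1 1 h hQ); ring.
  right; do 2!split => //; by apply: (lin2 16 (- (4 * v + 9)) hQ r); ring.
Qed.

Lemma T3_pure0 u v u' v' : T3 u v -> pmr u' u -> pmr v' v -> u' + v' != 1 -> pe0 u' v' = 0 ->
  (7 : F) = 0.
Proof.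
rewrite /pe0 => [[hs hm]] hu' hv' s1 h.
have hv : v = 1 - u by rewrite -hs; ring.
subst v.
case: hu' => hu'; case: hv' => hv'; subst u' v'.
- have e : u + (1 - u) = 1 by ring.
  by rewrite e eqxx in s1.
- by apply: (lin2 (2 * u + 1) ((2 * u + 1) * (2 * u - 4) - 4) h hm); ring.
- by apply: (lin2 (2 * (1 - u) + 1) ((2 * (1 - u) + 1) * (2 * (1 - u) - 4) - 4) h hm); ring.
- have h1 : (1:F) = 0 by apply: (lin1 (-1) h); ring.
  by move: one_nz; rewrite h1 eqxx.
Qed.

Lemma T3_pure1 u v u' v' : T3 u v -> pmr u' u -> pmr v' v -> pe1 u' v' = 0 ->
  [\/ u' = u /\ v' = v /\ (3 : F) = 0,
      u' = u /\ v' = - v /\ (13 : F) = 0 /\ 2 * (u - v) = 1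
    | u' = - u /\ v' = v /\ (13 : F) = 0 /\ 2 * (v - u) = 1].
Proof.
rewrite /pe1 => [[hs hm]] hu' hv' h.
have hv : v = 1 - u by rewrite -hs; ring.
subst v.
case: hu' => hu'; case: hv' => hv'; subst u' v'.
- constructor 1; do 2!split => //; by apply: (lin2 (-1) 1 h hm); ring.
- have r : 4 * u - 3 = 0 by apply: (lin2 (-1) 3 h hm); ring.
  constructor 2; do 2!split => //; split.
    by apply: (lin2 (4 * u - 1) (-16 - 3 * (4 * u - 1)) h hm); ring.
  by apply: subr0E; apply: (lin1 1 r); ring.
- have r : 4 * (1 - u) - 3 = 0 by apply: (lin2 (-1) 3 h hm); ring.
  constructor 3; do 2!split => //; split.
    by apply: (lin2 (4 * (1 - u) - 1) (-16 - 3 * (4 * (1 - u) - 1)) h hm); ring.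
  by apply: subr0E; apply: (lin1 1 r); ring.
- have h1 : (1:F) = 0 by apply: (lin2 1 (-1) h hm); ring.
  by move: one_nz; rewrite h1 eqxx.
Qed.


Lemma sgN_two (c : F) : c != 0 -> c != - c.
Proof.
move=> c0; apply/negP => /eqP h; move/eqP: c0; apply; apply: mul2_eq0.
by apply: (lin1 1 h); ring.
Qed.

Definition sg (s : bool) (c : F) := if s then - c else c.
Definition off (s : bool) (c : F) := if s then - c else 0.

Lemma sg_inj s s' c : c != 0 -> sg s c = sg s' c -> s = s'.
Proof.
move=> c0; case: s; case: s' => //= h.
- by move: (sgN_two c0); rewrite h eqxx.
- by move: (sgN_two c0); rewrite -h eqxx.
Qed.

Lemma pmr_sg s s' c : pmr (sg s' c) (sg s c).
Proof. by case: s; case: s'; rewrite /pmr /sg ?opprK; [left|right|right|left]. Qed.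

Lemma sg_sq s c : (sg s c) ^+ 2 = c ^+ 2.
Proof. by case: s; rewrite /sg ?sqrrN. Qed.

Lemma sg_nz s c : c != 0 -> sg s c != 0.
Proof. by case: s; rewrite /sg ?oppr_eq0. Qed.

Lemma sgN s c : sg (~~ s) c = - sg s c.
Proof. by case: s; rewrite /sg ?opprK. Qed.

Lemma difst s t s' t' a b : a != 0 -> b != 0 -> (s, t) != (s', t') ->
  dif (sg s a) (sg t b) (sg s' a) (sg t' b).
Proof.
move=> a0 b0; case: s; case: t; case: s'; case: t' => //= _; rewrite /dif /sg ?opprK;
  first [by constructor 1 | by constructor 2 | by constructor 3].
Qed.

Variables a b : F.
Hypothesis a0 : a != 0.
Hypothesis b0 : b != 0.

Definition D (x : F) := f (x + a + b) - f (x + a) - f (x + b) + f x.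
Definition S := [set x : F | f (x + a + b) - f (x + a) - f (x + b) + f x == 0].
Definition z0 (x : F) := [|| x == 0, x + a == 0, x + b == 0 | x + a + b == 0].
Definition z1 (x : F) := [|| x == 1, x + a == 1, x + b == 1 | x + a + b == 1].
Definition xz s t := off s a + off t b.
Definition xo s t := 1 + off s a + off t b.

Lemma inS x : (x \in S) = (D x == 0).
Proof. by rewrite inE. Qed.

Lemma D_eq x y1 y2 y3 y4 : x + a + b = y1 -> x + a = y2 -> x + b = y3 -> x = y4 ->
  D x = f y1 - f y2 - f y3 + f y4.
Proof. by rewrite /D => -> -> -> ->. Qed.

Lemma zero_neq1 : ((0 : F) == 1) = false.
Proof. by rewrite eq_sym oner_eq0. Qed.

Lemma patz s t : (xz s t \in S) = (E0 (sg s a) (sg t b) == 0) /\ z0 (xz s t) /\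
  z1 (xz s t) = [|| sg s a == 1, sg t b == 1 | sg s a + sg t b == 1].
Proof.
rewrite inS /xz /off /sg /z0 /z1 /E0; case: s; case: t.
- rewrite (@D_eq _ 0 (- b) (- a) (- a + - b)); try ring.
  split; first by apply/eqP/eqP => h; [apply: (lin1 1 h) | apply: (lin1 1 h)]; ring.
  split; first by apply/or4P; constructor 4; apply/eqP; ring.
  have -> : - a + - b + a + b = 0 by ring.
  have -> : - a + - b + a = - b by ring.
  have -> : - a + - b + b = - a by ring.
  by rewrite zero_neq1; case: (_ == 1); case: (_ == 1); case: (_ == 1).
- rewrite (@D_eq _ b 0 (- a + b) (- a)); try ring.
  split; first by apply/eqP/eqP => h; [apply: (lin1 (-1) h) | apply: (lin1 (-1) h)]; ring.
  split; first by apply/or4P; constructor 2; apply/eqP; ring.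
  have -> : - a + 0 + a + b = b by ring.
  have -> : - a + 0 + a = 0 by ring.
  have -> : - a + 0 + b = - a + b by ring.
  have -> : - a + 0 = - a by ring.
  by rewrite zero_neq1; case: (_ == 1); case: (_ == 1); case: (_ == 1).
- rewrite (@D_eq _ a (a + - b) 0 (- b)); try ring.
  split; first by apply/eqP/eqP => h; [apply: (lin1 (-1) h) | apply: (lin1 (-1) h)]; ring.
  split; first by apply/or4P; constructor 3; apply/eqP; ring.
  have -> : 0 + - b + a + b = a by ring.
  have -> : 0 + - b + a = a + - b by ring.
  have -> : 0 + - b + b = 0 by ring.
  have -> : 0 + - b = - b by ring.
  by rewrite zero_neq1; case: (_ == 1); case: (_ == 1); case: (_ == 1).
- rewrite (@D_eq _ (a + b) a b 0); try ring.
  split; first by apply/eqP/eqP => h; [apply: (lin1 1 h) | apply: (lin1 1 h)]; ring.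
  split; first by apply/or4P; constructor 1; apply/eqP; ring.
  have -> : (0 : F) + 0 = 0 by ring.
  rewrite !add0r.
  by rewrite zero_neq1.
Qed.


Lemma one_neq0' : ((1 : F) == 0) = false.
Proof. by rewrite oner_eq0. Qed.

Lemma pato s t : (xo s t \in S) = (E1 (sg s a) (sg t b) == 0) /\ z1 (xo s t) /\
  z0 (xo s t) = [|| 1 + sg s a == 0, 1 + sg t b == 0 | 1 + sg s a + sg t b == 0].
Proof.
rewrite inS /xo /off /sg /z0 /z1 /E1; case: s; case: t.
- rewrite (@D_eq _ 1 (1 + - b) (1 + - a) (1 + - a + - b)); try ring.
  split; first by apply/eqP/eqP => h; [apply: (lin1 1 h) | apply: (lin1 1 h)]; ring.
  split; first by apply/or4P; constructor 4; apply/eqP; ring.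
  have -> : 1 + - a + - b + a + b = 1 by ring.
  have -> : 1 + - a + - b + a = 1 + - b by ring.
  have -> : 1 + - a + - b + b = 1 + - a by ring.
  by rewrite one_neq0'; case: (_ == 0); case: (_ == 0); case: (_ == 0).
- rewrite (@D_eq _ (1 + b) 1 (1 + - a + b) (1 + - a)); try ring.
  split; first by apply/eqP/eqP => h; [apply: (lin1 (-1) h) | apply: (lin1 (-1) h)]; ring.
  split; first by apply/or4P; constructor 2; apply/eqP; ring.
  have -> : 1 + - a + 0 + a + b = 1 + b by ring.
  have -> : 1 + - a + 0 + a = 1 by ring.
  have -> : 1 + - a + 0 + b = 1 + - a + b by ring.
  have -> : 1 + - a + 0 = 1 + - a by ring.
  by rewrite one_neq0'; case: (_ == 0); case: (_ == 0); case: (_ == 0).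
- rewrite (@D_eq _ (1 + a) (1 + a + - b) 1 (1 + - b)); try ring.
  split; first by apply/eqP/eqP => h; [apply: (lin1 (-1) h) | apply: (lin1 (-1) h)]; ring.
  split; first by apply/or4P; constructor 3; apply/eqP; ring.
  have -> : 1 + 0 + - b + a + b = 1 + a by ring.
  have -> : 1 + 0 + - b + a = 1 + a + - b by ring.
  have -> : 1 + 0 + - b + b = 1 by ring.
  have -> : 1 + 0 + - b = 1 + - b by ring.
  by rewrite one_neq0'; case: (_ == 0); case: (_ == 0); case: (_ == 0).
- rewrite (@D_eq _ (1 + a + b) (1 + a) (1 + b) 1); try ring.
  split; first by apply/eqP/eqP => h; [apply: (lin1 1 h) | apply: (lin1 1 h)]; ring.
  split; first by apply/or4P; constructor 1; apply/eqP; ring.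
  have -> : 1 + 0 + 0 + a + b = 1 + a + b by ring.
  have -> : 1 + 0 + 0 + a = 1 + a by ring.
  have -> : 1 + 0 + 0 + b = 1 + b by ring.
  have -> : (1 : F) + 0 + 0 = 1 by ring.
  by rewrite one_neq0'.
Qed.

Lemma gen_lem x : x \in S -> ~~ z0 x -> ~~ z1 x -> 2 * x + a + b = 0.
Proof.
rewrite inS /z0 /z1 !negb_or => /eqP h /and4P[n1 n2 n3 n4] /and4P[m1 m2 m3 m4].
move: h; rewrite /D (fE n1 m1) (fE n2 m2) (fE n3 m3) (fE n4 m4) => h.
have : a * b * (2 * x + a + b) = 0.
  apply: (lin1 (x * (x + a) * (x + b) * (x + a + b)) h); field. fside.
by move/eqP; rewrite !mulf_eq0 (negbTE a0) (negbTE b0) /= => /eqP.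
Qed.

Lemma z0_cases x : z0 x -> exists s t, x = xz s t.
Proof.
rewrite /z0 /xz /off => /or4P[] /eqP h.
- by exists false, false; rewrite h; ring.
- by exists true, false; apply: subr0E; apply: (lin1 1 h); ring.
- by exists false, true; apply: subr0E; apply: (lin1 1 h); ring.
- by exists true, true; apply: subr0E; apply: (lin1 1 h); ring.
Qed.

Lemma z1_cases x : z1 x -> exists s t, x = xo s t.
Proof.
rewrite /z1 /xo /off => /or4P[] /eqP h.
- by exists false, false; rewrite h; ring.
- by exists true, false; apply: subr0E; apply: (lin1 1 h); ring.
- by exists false, true; apply: subr0E; apply: (lin1 1 h); ring.
- by exists true, true; apply: subr0E; apply: (lin1 1 h); ring.
Qed.

Lemma pure0_at s t : xz s t \in S -> ~~ z1 (xz s t) ->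
  [/\ pe0 (sg s a) (sg t b) = 0, sg s a + sg t b != 0, sg s a != 1, sg t b != 1
    & sg s a + sg t b != 1].
Proof.
have [-> [_ ->]] := patz s t; rewrite !negb_or => /eqP h /and3P[u1 v1 s1].
have [s0 e] := pure0_lem (sg_nz s a0) (sg_nz t b0) u1 v1 s1 h.
by split => //; rewrite /pe0 e subrr.
Qed.

Lemma pure1_at s t : xo s t \in S -> ~~ z0 (xo s t) ->
  [/\ pe1 (sg s a) (sg t b) = 0, sg s a + sg t b != 0, 1 + sg s a != 0 & 1 + sg t b != 0].
Proof.
have [-> [_ ->]] := pato s t; rewrite !negb_or => /eqP h /and3P[u1 v1 s1].
have [s0 e] := pure1_lem (sg_nz s a0) (sg_nz t b0) u1 v1 s1 h.
by split => //; rewrite /pe1 e subrr.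
Qed.

Lemma both_at s t : xz s t \in S -> z1 (xz s t) ->
  [\/ T1 (sg s a) (sg t b), T2 (sg s a) (sg t b), T3 (sg s a) (sg t b)
    | spec (sg s a) (sg t b)].
Proof.
have [-> [_ ->]] := patz s t => /eqP h /or3P hz.
apply: both_lem (sg_nz s a0) (sg_nz t b0) _ h.
by case: hz => /eqP ->; [left | right; left | right; right].
Qed.


Definition Z0 := [set x : F | z0 x].
Definition Z1 := [set x : F | z1 x].
Definition SP0 := (S :&: Z0) :\: Z1.
Definition SB := (S :&: Z0) :&: Z1.
Definition SP1 := (S :\: Z0) :&: Z1.
Definition SG := (S :\: Z0) :\: Z1.

Lemma card_split : #|S| = (#|SG| + #|SP0| + #|SP1| + #|SB|)%N.
Proof.
have h1 := cardsID Z0 S; have h2 := cardsID Z1 (S :&: Z0); have h3 := cardsID Z1 (S :\: Z0).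
rewrite /SG /SP0 /SP1 /SB; lia.
Qed.

Lemma inZ0 x : (x \in Z0) = z0 x. Proof. by rewrite /Z0 in_set. Qed.
Lemma inZ1 x : (x \in Z1) = z1 x. Proof. by rewrite /Z1 in_set. Qed.

Lemma memSG x : x \in SG -> [/\ x \in S, ~~ z0 x & ~~ z1 x].
Proof. by rewrite /SG !in_setD inZ0 inZ1 => /and3P[]. Qed.
Lemma memSP0 x : x \in SP0 -> [/\ x \in S, z0 x & ~~ z1 x].
Proof. by rewrite /SP0 in_setD in_setI inZ0 inZ1 => /and3P[]. Qed.
Lemma memSP1 x : x \in SP1 -> [/\ x \in S, ~~ z0 x & z1 x].
Proof. by rewrite /SP1 in_setI in_setD inZ0 inZ1 => /andP[/andP[]]. Qed.
Lemma memSB x : x \in SB -> [/\ x \in S, z0 x & z1 x].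
Proof. by rewrite /SB !in_setI inZ0 inZ1 => /andP[/andP[]]. Qed.

Lemma card_le1_pairs (A : {set F}) : (forall x y, x \in A -> y \in A -> x = y) -> (#|A| <= 1)%N.
Proof. by move=> h; apply/card_le1_eqP => x y hx hy; exact: (h y x hy hx). Qed.

Lemma cardG : (#|SG| <= 1)%N.
Proof.
apply: card_le1_pairs => x y /memSG[hx n0 n1] /memSG[hy m0 m1].
have e1 := gen_lem hx n0 n1; have e2 := gen_lem hy m0 m1.
apply: subr0E; apply: mul2_eq0; by apply: (lin2 1 (-1) e1 e2); ring.
Qed.

Lemma pat_neq s t s' t' : xz s t != xz s' t' -> (s, t) != (s', t').
Proof. by apply: contra => /eqP [-> ->]. Qed.
Lemma pat_neq1 s t s' t' : xo s t != xo s' t' -> (s, t) != (s', t').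
Proof. by apply: contra => /eqP [-> ->]. Qed.

Lemma cardP0 : (#|SP0| <= 1)%N.
Proof.
apply: card_le1_pairs => x y /memSP0[hx zx nx] /memSP0[hy zy ny].
have [s [t ex]] := z0_cases zx; have [s' [t' ey]] := z0_cases zy; subst x y.
have [//|neq] := eqVneq (xz s t) (xz s' t').
have [h s0 u1 v1 _] := pure0_at hx nx.
have [h' _ u1' v1' _] := pure0_at hy ny.
exfalso; exact: (P0pair (sg_nz s a0) (sg_nz t b0) (difst a0 b0 (pat_neq neq))
  u1 v1 s0 h u1' v1' h').
Qed.


Lemma opp3 (s1 t1 s2 t2 s3 t3 : bool) :
  (s1, t1) != (s2, t2) -> (s2, t2) != (s3, t3) -> (s3, t3) != (s1, t1) ->
  [\/ (s2, t2) == (~~ s1, ~~ t1), (s3, t3) == (~~ s2, ~~ t2) | (s1, t1) == (~~ s3, ~~ t3)].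
Proof.
by case: s1; case: t1; case: s2; case: t2; case: s3; case: t3 => //= *;
  first [by constructor 1 | by constructor 2 | by constructor 3].
Qed.

Lemma P1_no_opp s t : xo s t \in S -> ~~ z0 (xo s t) ->
  xo (~~ s) (~~ t) \in S -> ~~ z0 (xo (~~ s) (~~ t)) -> False.
Proof.
move=> h1 n1 h2 n2.
have [e1 s0 _ _] := pure1_at h1 n1; have [e2 _ _ _] := pure1_at h2 n2.
by rewrite !sgN in e2; exact: (P1opp s0 e1 e2).
Qed.

Lemma opp_pair s1 t1 s2 t2 : (s2, t2) == (~~ s1, ~~ t1) ->
  xo s1 t1 \in SP1 -> xo s2 t2 \in SP1 -> False.
Proof.
move=> /eqP [-> ->] /memSP1[h1 n1 _] /memSP1[h2 n2 _]; exact: (P1_no_opp h1 n1 h2 n2).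
Qed.

Lemma cardP1 : (#|SP1| <= 2)%N.
Proof.
rewrite leqNgt; apply/negP => /card_gt2P [x [y [z [[hx hy hz] [dxy dyz dzx]]]]].
have [_ _ zx] := memSP1 hx; have [_ _ zy] := memSP1 hy; have [_ _ zz] := memSP1 hz.
have [s1 [t1 ex]] := z1_cases zx; have [s2 [t2 ey]] := z1_cases zy.
have [s3 [t3 ez]] := z1_cases zz; subst x y z.
case: (opp3 (pat_neq1 dxy) (pat_neq1 dyz) (pat_neq1 dzx)) => ho.
- exact: (opp_pair ho hx hy).
- exact: (opp_pair ho hy hz).
- exact: (opp_pair ho hz hx).
Qed.

Lemma pe1S u v : pe1 u v = pe1 v u. Proof. by rewrite /pe1; ring. Qed.
Lemma pe0S u v : pe0 u v = pe0 v u. Proof. by rewrite /pe0; ring. Qed.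

Lemma adj2 (s1 t1 s2 t2 : bool) : (s1, t1) != (s2, t2) -> (s2, t2) != (~~ s1, ~~ t1) ->
  (s2 = ~~ s1 /\ t2 = t1) \/ (s2 = s1 /\ t2 = ~~ t1).
Proof. by case: s1; case: t1; case: s2; case: t2 => //= *; first [by left | by right]. Qed.

Lemma sg_m2 t c : sg t c = -2 -> pm 2 c.
Proof.
rewrite /pm /sg; case: t => h; last by right.
by left; rewrite -[c]opprK h opprK.
Qed.

Lemma P1two : (1 < #|SP1|)%N -> (pm 2 b /\ a ^+ 2 = -1) \/ (pm 2 a /\ b ^+ 2 = -1).
Proof.
move=> /card_gt1P [x [y [hx hy dxy]]].
have [h1 n1 zx] := memSP1 hx; have [h2 n2 zy] := memSP1 hy.
have [s1 [t1 ex]] := z1_cases zx; have [s2 [t2 ey]] := z1_cases zy; subst x y.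
have d := pat_neq1 dxy.
have [ho|nho] := eqVneq (s2, t2) (~~ s1, ~~ t1); first by case: (opp_pair (introT eqP ho) hx hy).
have [e1 _ _ _] := pure1_at h1 n1; have [e2 _ _ _] := pure1_at h2 n2.
case: (adj2 d nho) => [[hs ht]|[hs ht]]; subst s2 t2.
- rewrite sgN in e2; have [hv hu] := P1adj (sg_nz s1 a0) e1 e2.
  by left; split; [exact: (sg_m2 hv) | rewrite -(sg_sq s1)].
- rewrite sgN pe1S in e2; rewrite pe1S in e1.
  have [hv hu] := P1adj (sg_nz t1 b0) e1 e2.
  by right; split; [exact: (sg_m2 hv) | rewrite -(sg_sq t1)].
Qed.

Definition Exc := (p = 29%N /\ ((pm 2 a /\ pm 12 b) \/ (pm 12 a /\ pm 2 b)))
     \/ (p = 37%N /\ ((pm 2 a /\ pm 6 b) \/ (pm 6 a /\ pm 2 b))).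

Lemma charp_eq q : prime q -> (q%:R : F) = 0 -> p = q.
Proof. by move=> pq /eqP; rewrite natF0 dvdn_prime2 ?prp // => /eqP. Qed.

Lemma pmr_pm c s x : pmr (sg s x) c%:R -> pm c x.
Proof.
rewrite /pmr /pm /sg; case: s => -[] h;
  first [by left | by right | by left; rewrite -[x]opprK h ?opprK | by right; rewrite -[x]opprK h ?opprK].
Qed.

Lemma pm_pmr c s x : pm c x -> pmr (sg s x) c%:R.
Proof.
rewrite /pmr /pm /sg; case: s => -[] ->; rewrite ?opprK; by [left|right].
Qed.

Lemma Exc_lem : (1 < #|SP1|)%N -> (0 < #|SP0|)%N -> Exc.
Proof.
move=> h1 /card_gt0P [x hx].
have [hS zx nx] := memSP0 hx; have [s [t ex]] := z0_cases zx; subst x.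
have [e _ _ _ _] := pure0_at hS nx.
case: (P1two h1) => [[hb ha]|[ha hb]].
- have hk : (sg s a) ^+ 2 = -1 by rewrite sg_sq.
  case: (Xcore hk (pm_pmr t hb) e) => [[h29 hk12]|[h37 hk6]].
  + by left; split; [exact: charp_eq h29 | right; split => //; exact: pmr_pm hk12].
  + by right; split; [exact: charp_eq h37 | right; split => //; exact: pmr_pm hk6].
- have hk : (sg t b) ^+ 2 = -1 by rewrite sg_sq.
  rewrite pe0S in e.
  case: (Xcore hk (pm_pmr s ha) e) => [[h29 hk12]|[h37 hk6]].
  + by left; split; [exact: charp_eq h29 | left; split => //; exact: pmr_pm hk12].
  + by right; split; [exact: charp_eq h37 | left; split => //; exact: pmr_pm hk6].
Qed.


Definition spab := (3 : F) = 0 /\ pmr a 1 /\ pmr b 1.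

Lemma pmr1 s x : pmr (sg s x) 1 -> pmr x 1.
Proof. by move=> h; have := @pmr_pm 1 s x h. Qed.

Lemma both_T s t : ~ spab -> xz s t \in S -> z1 (xz s t) ->
  [\/ T1 (sg s a) (sg t b), T2 (sg s a) (sg t b) | T3 (sg s a) (sg t b)].
Proof.
move=> nsp h z; case: (both_at h z) => [h1|h2|h3|[h3 [hu hv]]].
- by constructor 1. - by constructor 2. - by constructor 3.
- by case: nsp; split => //; split; [exact: pmr1 hu | exact: pmr1 hv].
Qed.

Lemma cardB : ~ spab -> (#|SB| <= 1)%N.
Proof.
move=> nsp; apply: card_le1_pairs => x y /memSB[hx zx nx] /memSB[hy zy ny].
have [s [t ex]] := z0_cases zx; have [s' [t' ey]] := z0_cases zy; subst x y.
have [//|neq] := eqVneq (xz s t) (xz s' t').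
exfalso; exact: (TT (sg_nz s a0) (sg_nz t b0) (difst a0 b0 (pat_neq neq))
  (both_T nsp hx nx) (both_T nsp hy ny)).
Qed.

Lemma coprime_contra m k : (m%:R : F) = 0 -> (k%:R : F) = 0 -> coprime m k -> False.
Proof. exact: natF_coprime. Qed.

Lemma B_excl : ~ spab -> (0 < #|SB|)%N -> (0 < #|SP0|)%N -> (0 < #|SP1|)%N -> False.
Proof.
move=> nsp /card_gt0P[x hx] /card_gt0P[y hy] /card_gt0P[z hz].
have [hxS zx nx] := memSB hx; have [s [t ex]] := z0_cases zx; subst x.
have [hyS zy ny] := memSP0 hy; have [s1 [t1 ey]] := z0_cases zy; subst y.
have [hzS nz zz] := memSP1 hz; have [s2 [t2 ez]] := z1_cases zz; subst z.
have [e0 _ u1 v1 w1] := pure0_at hyS ny.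
have [e1 _ u2 v2] := pure1_at hzS nz.
case: (both_T nsp hxS nx) => hT.
- have h15 := T1_pure0 hT (pmr_sg s s1 a) (pmr_sg t t1 b) u1 e0.
  case: (T1_pure1 hT (pmr_sg s s2 a) (pmr_sg t t2 b) u2 e1) => [[_ [_ h]]|[_ [_ h]]].
  + exact: (coprime_contra h15 h).
  + exact: (coprime_contra h15 h).
- rewrite pe0S in e0; rewrite pe1S in e1.
  have h15 := T1_pure0 hT (pmr_sg t t1 b) (pmr_sg s s1 a) v1 e0.
  case: (T1_pure1 hT (pmr_sg t t2 b) (pmr_sg s s2 a) v2 e1) => [[_ [_ h]]|[_ [_ h]]].
  + exact: (coprime_contra h15 h).
  + exact: (coprime_contra h15 h).
- have h7 := T3_pure0 hT (pmr_sg s s1 a) (pmr_sg t t1 b) w1 e0.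
  case: (T3_pure1 hT (pmr_sg s s2 a) (pmr_sg t t2 b) e1)
    => [[_ [_ h]]|[_ [_ [h _]]]|[_ [_ [h _]]]]; exact: (coprime_contra h7 h).
Qed.

Lemma samepat s1 t1 s2 t2 : sg s1 a = sg s2 a -> sg t1 b = sg t2 b -> (s1, t1) != (s2, t2) -> False.
Proof. by move=> /(sg_inj a0) -> /(sg_inj b0) ->; rewrite eqxx. Qed.

Lemma P1_le1 : ~ spab -> (0 < #|SB|)%N -> (1 < #|SP1|)%N -> False.
Proof.
move=> nsp /card_gt0P[x hx] /card_gt1P [y [z [hy hz dyz]]].
have [hxS zx nx] := memSB hx; have [s [t ex]] := z0_cases zx; subst x.
have [hyS ny zy] := memSP1 hy; have [s1 [t1 ey]] := z1_cases zy; subst y.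
have [hzS nz zz] := memSP1 hz; have [s2 [t2 ez]] := z1_cases zz; subst z.
have d := pat_neq1 dyz.
have [e1 _ u1 v1] := pure1_at hyS ny.
have [e2 _ u2 v2] := pure1_at hzS nz.
case: (both_T nsp hxS nx) => hT.
- case: (T1_pure1 hT (pmr_sg s s1 a) (pmr_sg t t1 b) u1 e1) => [[p1 [q1 h1]]|[p1 [q1 h1]]];
  case: (T1_pure1 hT (pmr_sg s s2 a) (pmr_sg t t2 b) u2 e2) => [[p2 [q2 h2]]|[p2 [q2 h2]]];
  try exact: (coprime_contra h1 h2);
  by apply: (samepat _ _ d); rewrite ?p1 ?p2 ?q1 ?q2.
- rewrite pe1S in e1; rewrite pe1S in e2.
  case: (T1_pure1 hT (pmr_sg t t1 b) (pmr_sg s s1 a) v1 e1) => [[p1 [q1 h1]]|[p1 [q1 h1]]];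
  case: (T1_pure1 hT (pmr_sg t t2 b) (pmr_sg s s2 a) v2 e2) => [[p2 [q2 h2]]|[p2 [q2 h2]]];
  try exact: (coprime_contra h1 h2);
  by apply: (samepat _ _ d); rewrite ?p1 ?p2 ?q1 ?q2.
- case: (T3_pure1 hT (pmr_sg s s1 a) (pmr_sg t t1 b) e1)
    => [[p1 [q1 h1]]|[p1 [q1 [h1 r1]]]|[p1 [q1 [h1 r1]]]];
  case: (T3_pure1 hT (pmr_sg s s2 a) (pmr_sg t t2 b) e2)
    => [[p2 [q2 h2]]|[p2 [q2 [h2 r2]]]|[p2 [q2 [h2 r2]]]];
  try exact: (coprime_contra h1 h2);
  try (by apply: (samepat _ _ d); rewrite ?p1 ?p2 ?q1 ?q2);
  move/eqP: two_nz; case; by apply: (lin2 (-1) (-1) r1 r2); ring.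
Qed.

Lemma B_nsp_bound : ~ spab -> (0 < #|SB|)%N -> (#|S| <= 3)%N.
Proof.
move=> nsp hB.
have := card_split; have := cardG; have := cardB nsp; have := cardP0; have := cardP1.
have := B_excl nsp hB; have := P1_le1 nsp hB.
case: (#|SP1|) => [|[|n]]; case: (#|SP0|) => [|[|m]] /=; lia.
Qed.


Lemma small_mem y : (3 : F) = 0 ->
  (y = 0 \/ y = 1 \/ y = -1 \/ y = 2 \/ y = -2 \/ y = 3 \/ y = -3) -> y \in [set (0:F); 1; -1].
Proof.
move=> h3 hy; rewrite !inE.
have e2 : (2 : F) = -1 by apply: subr0E; apply: (lin1 1 h3); ring.
have em2 : (-2 : F) = 1 by apply: subr0E; apply: (lin1 (-1) h3); ring.
have em3 : (-3 : F) = 0 by rewrite h3 oppr0.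
by case: hy => [->|[->|[->|[->|[->|[->|->]]]]]]; rewrite ?em3 ?em2 ?e2 ?h3 eqxx ?orbT.
Qed.

Ltac pick := repeat (first [left; ring | right]); ring.

Lemma special_bound : spab -> (#|S| <= 3)%N.
Proof.
move=> [h3 [ha hb]].
have sub : S \subset [set (0:F); 1; -1].
  apply/subsetP => x hx.
  case z0x: (z0 x).
    have [s [t ->]] := z0_cases z0x; apply: small_mem => //.
    by rewrite /xz /off; case: ha => ->; case: hb => ->; case: s; case: t; pick.
  case z1x: (z1 x).
    have [s [t ->]] := z1_cases z1x; apply: small_mem => //.
    by rewrite /xo /off; case: ha => ->; case: hb => ->; case: s; case: t; pick.
  have hg := gen_lem hx (negbT z0x) (negbT z1x).
  have -> : x = a + b by apply: subr0E; apply: (lin2 (-1) x hg h3); ring.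
  apply: small_mem => //; by case: ha => ->; case: hb => ->; pick.
apply: (leq_trans (subset_leq_card sub)).
apply: (leq_trans (leq_card_setU _ _).1).
by rewrite cardsU1 !cards1; case: (_ \notin _).
Qed.

Lemma main_count : (#|S| <= 4)%N /\ (#|S| = 4%N -> Exc).
Proof.
have hs := card_split; have hg := cardG; have h0 := cardP0; have h1 := cardP1.
have [hB|hB] := posnP #|SB|.
  split; first by lia.
  move=> h4; apply: Exc_lem; lia.
have h3 : (#|S| <= 3)%N.
  case: (Classical_Prop.classic spab) => sp; first exact: special_bound.
  exact: B_nsp_bound.
by split => [|h4]; [lia | exfalso; lia].
Qed.

End Alg.

Section Fin.
Variable F : finFieldType.
Local Notation f := (@finv01 F).

Lemma nabla_swap (a b : F) : nabla f a b = nabla f b a.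
Proof.
rewrite /nabla; apply: eq_card => x; rewrite !inE [x + b + a]addrAC.
have -> : f (x + a + b) - f (x + b) - f (x + a) + f x =
          f (x + a + b) - f (x + a) - f (x + b) + f x by ring.
by [].
Qed.

Lemma nabla_negl (a b : F) : nabla f (- a) b = nabla f a b.
Proof.
rewrite /nabla; symmetry; rewrite -(card_preimset _ (addIr (- a))); apply: eq_card => x.
rewrite !inE.
have -> : x + - a + a + b = x + b by ring.
have -> : x + - a + a = x by ring.
have -> : f (x + b) - f x - f (x + - a + b) + f (x + - a) =
  - (f (x + - a + b) - f (x + - a) - f (x + b) + f x) by ring.
by rewrite oppr_eq0.
Qed.

Lemma nabla_negr (a b : F) : nabla f a (- b) = nabla f a b.
Proof. by rewrite nabla_swap nabla_negl nabla_swap. Qed.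

Lemma nabla_pm c d (a b : F) : pm c a -> pm d b -> nabla f a b = nabla f c%:R d%:R.
Proof.
by case=> ->; case=> ->; rewrite ?nabla_negl ?nabla_negr.
Qed.

Lemma nabla0l (b : F) : nabla f 0 b = #|F|.
Proof.
rewrite /nabla -cardsT; apply: eq_card => x; rewrite !inE addr0.
by apply/eqP; ring.
Qed.

Lemma nabla0r (a : F) : nabla f a 0 = #|F|.
Proof. by rewrite nabla_swap nabla0l. Qed.

Variable p : nat.
Hypothesis chF : p \in [pchar F].

Lemma natF_eq m n : (m <= n)%N -> ((n%:R : F) == m%:R) = (p %| n - m)%N.
Proof.
move=> hmn; rewrite -{1}(subnK hmn) natrD -subr_eq0 addrK.
by rewrite (natF0 chF).
Qed.

Lemma natF_neq m n : (m < n)%N -> (n < p)%N -> ((n%:R : F) != m%:R).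
Proof.
move=> hmn hnp; rewrite (natF_eq (ltnW hmn)).
have h0 : (0 < n - m)%N by rewrite subn_gt0.
apply/negP => /(dvdn_leq h0) hle.
by have := leq_ltn_trans hle (leq_ltn_trans (leq_subr m n) hnp); rewrite ltnn.
Qed.

Lemma fnat0 n : (p %| n)%N -> f n%:R = 1.
Proof. by rewrite -(natF0 chF) => /eqP ->; rewrite f0. Qed.

Lemma fnat1 n : (0 < n)%N -> (p %| n - 1)%N -> f n%:R = 0.
Proof. by move=> h0; rewrite -natF_eq // => /eqP ->; rewrite f1. Qed.

Lemma fnatinv n k : (0 < n)%N -> ~~ (p %| n)%N -> ~~ (p %| n - 1)%N ->
  (0 < n * k)%N -> (p %| n * k - 1)%N -> f n%:R = k%:R.
Proof.
move=> n0 h1 h2 nk0 h3.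
have nz : (n%:R : F) != 0 by rewrite (natF0 chF).
have n1 : (n%:R : F) != 1%:R by rewrite natF_eq.
have hm : (n%:R : F) * k%:R = 1%:R by apply/eqP; rewrite -natrM natF_eq.
by rewrite fE //; apply: (mulfI nz); rewrite mulfV // hm.
Qed.

Lemma sum0 k1 k2 k3 k4 : (k1 + k4 == k2 + k3 %[mod p])%N ->
  (k1%:R : F) - k2%:R - k3%:R + k4%:R = 0.
Proof.
move=> h.
have e : ((k1 + k4)%:R : F) = (k2 + k3)%:R.
  by rewrite -(GRing.natr_mod_pchar chF) (eqP h) (GRing.natr_mod_pchar chF).
have -> : (k1%:R : F) - k2%:R - k3%:R + k4%:R = (k1 + k4)%:R - (k2 + k3)%:R.
  by rewrite !natrD; ring.
by rewrite e subrr.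
Qed.

Lemma fnat0' n : (p %| n)%N -> f n%:R = 1%:R.
Proof. exact: fnat0. Qed.
Lemma fnat1' n : (0 < n)%N -> (p %| n - 1)%N -> f n%:R = 0%:R.
Proof. exact: fnat1. Qed.

Lemma natF_ne2 m n : m != n -> (m < p)%N -> (n < p)%N -> ((m%:R : F) == n%:R) = false.
Proof.
move=> hmn hm hn; apply/negbTE.
case: (ltngtP m n) => h; first by rewrite eq_sym natF_neq.
  by rewrite natF_neq.
by rewrite h eqxx in hmn.
Qed.
End Fin.


Lemma wit29 (F : finFieldType) : 29 \in [pchar F] -> (4 <= nabla (@finv01 F) 2%:R 12%:R)%N.
Proof.
move=> ch; apply/card_geqP; exists [:: 16%:R; 17%:R; 22%:R; 28%:R]; split => //.
  by rewrite /= !inE !(natF_ne2 ch).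
move=> x; rewrite !inE => /or4P[] /eqP ->.
- rewrite -!natrD (@fnat1' _ _ ch (16 + 2 + 12)) // (@fnatinv _ _ ch (16 + 2) 21) // (@fnatinv _ _ ch (16 + 12) 28) // (@fnatinv _ _ ch (16) 20) //.
  by apply/eqP; apply: (sum0 ch).
- rewrite -!natrD (@fnatinv _ _ ch (17 + 2 + 12) 15) // (@fnatinv _ _ ch (17 + 2) 26) // (@fnat0' _ _ ch (17 + 12)) // (@fnatinv _ _ ch (17) 12) //.
  by apply/eqP; apply: (sum0 ch).
- rewrite -!natrD (@fnatinv _ _ ch (22 + 2 + 12) 25) // (@fnatinv _ _ ch (22 + 2) 23) // (@fnatinv _ _ ch (22 + 12) 6) // (@fnatinv _ _ ch (22) 4) //.
  by apply/eqP; apply: (sum0 ch).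
- rewrite -!natrD (@fnatinv _ _ ch (28 + 2 + 12) 9) // (@fnat1' _ _ ch (28 + 2)) // (@fnatinv _ _ ch (28 + 12) 8) // (@fnatinv _ _ ch (28) 28) //.
  by apply/eqP; apply: (sum0 ch).
Qed.

Lemma wit37 (F : finFieldType) : 37 \in [pchar F] -> (4 <= nabla (@finv01 F) 2%:R 6%:R)%N.
Proof.
move=> ch; apply/card_geqP; exists [:: 29%:R; 30%:R; 33%:R; 36%:R]; split => //.
  by rewrite /= !inE !(natF_ne2 ch).
move=> x; rewrite !inE => /or4P[] /eqP ->.
- rewrite -!natrD (@fnat0' _ _ ch (29 + 2 + 6)) // (@fnatinv _ _ ch (29 + 2) 6) // (@fnatinv _ _ ch (29 + 6) 18) // (@fnatinv _ _ ch (29) 23) //.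
  by apply/eqP; apply: (sum0 ch).
- rewrite -!natrD (@fnat1' _ _ ch (30 + 2 + 6)) // (@fnatinv _ _ ch (30 + 2) 22) // (@fnatinv _ _ ch (30 + 6) 36) // (@fnatinv _ _ ch (30) 21) //.
  by apply/eqP; apply: (sum0 ch).
- rewrite -!natrD (@fnatinv _ _ ch (33 + 2 + 6) 28) // (@fnatinv _ _ ch (33 + 2) 18) // (@fnatinv _ _ ch (33 + 6) 19) // (@fnatinv _ _ ch (33) 9) //.
  by apply/eqP; apply: (sum0 ch).
- rewrite -!natrD (@fnatinv _ _ ch (36 + 2 + 6) 16) // (@fnat1' _ _ ch (36 + 2)) // (@fnatinv _ _ ch (36 + 6) 15) // (@fnatinv _ _ ch (36) 36) //.
  by apply/eqP; apply: (sum0 ch).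
Qed.

Lemma pm_nz (F : finFieldType) c (a : F) : (c%:R : F) != 0 -> pm c a -> a != 0.
Proof. by move=> hc [->|->]; rewrite ?oppr_eq0. Qed.

Theorem theorem3p3 (p n : nat) (F : finFieldType) :
  prime p -> odd p -> (0 < n)%N -> #|F| = (p ^ n)%N ->
  [/\ (p = 29%N \/ p = 37%N -> nablaU (@finv01 F) = 4%N),
      (p <> 29%N /\ p <> 37%N -> (nablaU (@finv01 F) <= 3)%N)
    & forall a b : F, nabla (@finv01 F) a b = 4%N <->
        (p = 29%N /\ ((pm 2 a /\ pm 12 b) \/ (pm 12 a /\ pm 2 b)))
     \/ (p = 37%N /\ ((pm 2 a /\ pm 6 b) \/ (pm 6 a /\ pm 2 b)))].
Proof.
move=> pr op n0 cardF.
have chF : p \in [pchar F] := card_finPcharP cardF pr.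
have odd4 : #|F| != 4%N.
  apply/negP => /eqP h; have : odd (p ^ n) by rewrite oddX op orbT.
  by rewrite -cardF h.
have main (a b : F) (a0 : a != 0) (b0 : b != 0) :
  (nabla (@finv01 F) a b <= 4)%N /\ (nabla (@finv01 F) a b = 4%N -> Exc p a b)
  := main_count chF op a0 b0.
have w29 : p = 29%N -> (4 <= nabla (@finv01 F) 2%:R 12%:R)%N.
  by move=> hp; subst p; exact: wit29.
have w37 : p = 37%N -> (4 <= nabla (@finv01 F) 2%:R 6%:R)%N.
  by move=> hp; subst p; exact: wit37.
have nz c : p = 29%N \/ p = 37%N -> c \in [:: 2; 6; 12]%N -> (c%:R : F) != 0.
  by move=> hp; rewrite (natF0 chF) !inE; case: hp => ->; case/or3P => /eqP ->.
have exc4 (a b : F) : Exc p a b -> nabla (@finv01 F) a b = 4%N.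
  move=> he.
  have hp : p = 29%N \/ p = 37%N by case: he => [[h _]|[h _]]; [left|right].
  have [a0 b0] : a != 0 /\ b != 0.
    case: he => [[_ [[ha hb]|[ha hb]]]|[_ [[ha hb]|[ha hb]]]];
      by split; [apply: (pm_nz _ ha) | apply: (pm_nz _ hb)]; apply: nz.
  apply/eqP; rewrite eqn_leq (main a b a0 b0).1 /=.
  case: he => [[h [[ha hb]|[ha hb]]]|[h [[ha hb]|[ha hb]]]];
    rewrite (nabla_pm ha hb) ?[nabla _ 12%:R _]nabla_swap ?[nabla _ 6%:R _]nabla_swap.
  - exact: w29.
  - exact: w29.
  - exact: w37.
  - exact: w37.
split.
- move=> hp; apply/eqP; rewrite eqn_leq; apply/andP; split.
    apply/bigmax_leqP => a a0; apply/bigmax_leqP => b b0; exact: (main a b a0 b0).1.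
  rewrite /nablaU; case: hp => hp.
    have h2 : (2%:R : F) != 0 by apply: nz => //; left.
    have h12 : (12%:R : F) != 0 by apply: nz => //; left.
    apply: (leq_trans _ (leq_bigmax_cond (2%:R : F) h2)).
    apply: (leq_trans _ (leq_bigmax_cond (12%:R : F) h12)).
    exact: w29.
  have h2 : (2%:R : F) != 0 by apply: nz => //; right.
  have h6 : (6%:R : F) != 0 by apply: nz => //; right.
  apply: (leq_trans _ (leq_bigmax_cond (2%:R : F) h2)).
  apply: (leq_trans _ (leq_bigmax_cond (6%:R : F) h6)).
  exact: w37.
- move=> [n29 n37]; apply/bigmax_leqP => a a0; apply/bigmax_leqP => b b0.
  have [h4 he] := main a b a0 b0.
  have hne : nabla (@finv01 F) a b != 4%N.
    by apply/negP => /eqP /he [[h _]|[h _]].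
  by move: h4; rewrite leq_eqVlt (negbTE hne).
- move=> a b; split; last exact: exc4.
  have [->|a0] := eqVneq a 0; first by rewrite nabla0l => h; rewrite h eqxx in odd4.
  have [->|b0] := eqVneq b 0; first by rewrite nabla0r => h; rewrite h eqxx in odd4.
  exact: (main a b a0 b0).2.
Qed.
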